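(* The set $\mathcal{B}_{2,4}$ consisting of the six identities (M1) $(xy)(zt)=(xz)(yt)$, (M2) $(xy)(zt)=(ty)(zx)$, (M3) $((xy)z)t=((xt)z)y$, (M4) $(x(yz))t=(x(tz))y$, (M5) $x((yz)t)=z((yx)t)$, (M6) $x(y(zt))=z(y(xt))$, together with $x(xy)=y$, is a basis for $\Sigma_{2,4}$.
   Context: $\Sigma_{2,4}$ is the set of groupoid identities satisfied in the integers $\mathbb{Z}$ by both binary operations $x-y$ and $-x-y$. A basis is a set of identities whose equational consequences are exactly $\Sigma_{2,4}$. *)

(* Defs.v *)
From Stdlib Require Import ZArith List.
Import ListNotations.
Open Scope Z_scope.

Inductive term : Type :=
| V : nat -> term
| M : term -> term -> term.

Definition identity := (term * term)%type.

Fixpoint subst (sg : nat -> term) (t : term) : term :=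
  match t with
  | V n => sg n
  | M a b => M (subst sg a) (subst sg b)
  end.

Fixpoint eval {T : Type} (op : T -> T -> T) (v : nat -> T) (t : term) : T :=
  match t with
  | V n => v n
  | M a b => op (eval op v a) (eval op v b)
  end.

Definition satisfies {T : Type} (op : T -> T -> T) (p : identity) : Prop :=
  forall v : nat -> T, eval op v (fst p) = eval op v (snd p).

Definition Sigma24 (p : identity) : Prop :=
  satisfies (fun x y : Z => x - y) p /\ satisfies (fun x y : Z => - x - y) p.

Inductive derivable (E : identity -> Prop) : term -> term -> Prop :=
| der_ax : forall (p : identity) (sg : nat -> term),
    E p -> derivable E (subst sg (fst p)) (subst sg (snd p))
| der_refl : forall t, derivable E t t
| der_sym : forall s t, derivable E s t -> derivable E t s
| der_trans : forall s t u, derivable E s t -> derivable E t u -> derivable E s u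
| der_cong : forall s1 t1 s2 t2,
    derivable E s1 t1 -> derivable E s2 t2 -> derivable E (M s1 s2) (M t1 t2).

Definition is_basis (E Th : identity -> Prop) : Prop :=
  forall s t : term, derivable E s t <-> Th (s, t).

Definition x := V 0.
Definition y := V 1.
Definition z := V 2.
Definition t := V 3.

Definition B24_list : list identity :=
  [ (M (M x y) (M z t), M (M x z) (M y t));
    (M (M x y) (M z t), M (M t y) (M z x));
    (M (M (M x y) z) t, M (M (M x t) z) y);
    (M (M x (M y z)) t, M (M x (M t z)) y);
    (M x (M (M y z) t), M z (M (M y x) t));
    (M x (M y (M z t)), M z (M y (M x t)));
    (M x (M x y), y) ]%list.

Definition B24 (p : identity) : Prop := In p B24_list.

(* Main.v *)
Require Import Defs.
From Stdlib Require Import ZArith List Lia Setoid Morphisms.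

Record ALG := mkALG {
 car : Type; eqv : car -> car -> Prop; op : car -> car -> car; pt : car;
 eqv_eq : Equivalence eqv;
 op_prop : Proper (eqv ==> eqv ==> eqv) op;
 aI : forall x y, eqv (op x (op x y)) y;
 aM1 : forall x y z t, eqv (op (op x y) (op z t)) (op (op x z) (op y t));
 aM2 : forall x y z t, eqv (op (op x y) (op z t)) (op (op t y) (op z x));
 aM6 : forall x y z t, eqv (op x (op y (op z t))) (op z (op y (op x t))) }.

#[global] Instance eqv_Equiv (G : ALG) : Equivalence (eqv G) := eqv_eq G.
#[global] Instance op_Proper (G:ALG) : Proper (eqv G ==> eqv G ==> eqv G) (op G) := op_prop G.

Local Notation "x ≡ y" := (eqv _ x y) (at level 70).
Local Notation "x ⋅ y" := (op _ x y) (at level 40, left associativity).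



Definition aa (G:ALG) (x : car G) := x ⋅ (pt G ⋅ pt G).
Definition pl (G:ALG) (x y : car G) := aa G x ⋅ (pt G ⋅ y).
Definition ng (G:ALG) (x : car G) := pt G ⋅ (aa G x ⋅ pt G).
Definition cc (G:ALG) := pt G ⋅ pt G.

#[global] Instance aa_Proper G : Proper (eqv G ==> eqv G) (aa G).
Proof. unfold aa; solve_proper. Qed.
#[global] Instance pl_Proper G : Proper (eqv G ==> eqv G ==> eqv G) (pl G).
Proof. unfold pl; solve_proper. Qed.
#[global] Instance ng_Proper G : Proper (eqv G ==> eqv G) (ng G).
Proof. unfold ng; solve_proper. Qed.

Lemma lE G (x w : car G) : (x ⋅ (w ⋅ w)) ⋅ (w ⋅ w) ≡ x.
Proof. rewrite aM2. rewrite !aI. reflexivity. Qed.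

Lemma lC G (p q r w : car G) : (p ⋅ q) ⋅ w ≡ (p ⋅ r) ⋅ (q ⋅ (r ⋅ w)).
Proof. rewrite aM1, aI. reflexivity. Qed.

Lemma aa_aa G (x : car G) : aa G (aa G x) ≡ x.
Proof. unfold aa. apply lE. Qed.

Lemma pl_0l G (y : car G) : pl G (pt G) y ≡ y.
Proof. unfold pl, aa. rewrite !aI. reflexivity. Qed.

Lemma pl_0r G (x : car G) : pl G x (pt G) ≡ x.
Proof. unfold pl. apply aa_aa. Qed.

Lemma pl_comm G (x y : car G) : pl G x y ≡ pl G y x.
Proof. unfold pl, aa. apply aM2. Qed.

Lemma lA1 G (x y : car G) : aa G (pl G x y) ≡ x ⋅ (pt G ⋅ aa G y).
Proof.
  unfold pl. set (e := pt G). unfold aa at 1. fold e.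
  rewrite (lC _ (aa G x) (e ⋅ y) (e ⋅ e) (e ⋅ e)).
  unfold aa at 1. fold e. rewrite lE. rewrite aM1. rewrite aI. reflexivity.
Qed.

Lemma pl_assoc G (x y z : car G) : pl G (pl G x y) z ≡ pl G x (pl G y z).
Proof.
  unfold pl at 1. rewrite lA1. set (e := pt G).
  rewrite (lC _ x (e ⋅ aa G y) (e ⋅ e) (e ⋅ z)).
  unfold pl. fold e. apply op_Proper; [reflexivity|].
  rewrite (lC _ e (aa G y) e ((e ⋅ e) ⋅ (e ⋅ z))).
  rewrite aM6. rewrite aI. reflexivity.
Qed.

Lemma pl_ng G (x : car G) : pl G x (ng G x) ≡ pt G.
Proof. unfold pl, ng. rewrite !aI. reflexivity. Qed.

Lemma aa_pl G (x y : car G) : aa G (pl G x y) ≡ pl G (aa G x) (aa G y).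
Proof. rewrite lA1. unfold pl at 1. rewrite aa_aa. reflexivity. Qed.

Lemma affine G (x y : car G) : x ⋅ y ≡ pl G (aa G x) (pl G (cc G) (ng G y)).
Proof.
  unfold pl at 1. rewrite aa_aa. unfold pl, ng, cc. set (e := pt G).
  rewrite aI. unfold aa at 1. fold e. rewrite aM2. rewrite aI.
  unfold aa. fold e. rewrite lE. rewrite aI. reflexivity.
Qed.

Lemma pl_swap G (x y z : car G) : pl G x (pl G y z) ≡ pl G y (pl G x z).
Proof. rewrite <- !pl_assoc. rewrite (pl_comm G x y). reflexivity. Qed.

Lemma ng_pl_l G (x : car G) : pl G (ng G x) x ≡ pt G.
Proof. rewrite pl_comm. apply pl_ng. Qed.

Lemma pl_cancel G (x y z : car G) : pl G x y ≡ pl G x z -> y ≡ z.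
Proof.
  intro H. rewrite <- (pl_0l G y), <- (pl_0l G z). rewrite <- (ng_pl_l G x).
  rewrite !pl_assoc, H. reflexivity.
Qed.

Lemma ng_unique G (x y : car G) : pl G x y ≡ pt G -> y ≡ ng G x.
Proof. intro H. apply (pl_cancel G x). rewrite H, pl_ng. reflexivity. Qed.

Lemma ng_pl G (x y : car G) : ng G (pl G x y) ≡ pl G (ng G x) (ng G y).
Proof.
  symmetry. apply ng_unique. rewrite pl_assoc. rewrite (pl_swap G y).
  rewrite pl_ng, pl_0r, pl_ng. reflexivity.
Qed.

Lemma ng_ng G (x : car G) : ng G (ng G x) ≡ x.
Proof. symmetry. apply ng_unique. apply ng_pl_l. Qed.

Lemma ng_0 G : ng G (pt G) ≡ pt G.
Proof. symmetry. apply ng_unique. apply pl_0l. Qed.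

Lemma aa_0 G : aa G (pt G) ≡ pt G.
Proof. unfold aa. apply aI. Qed.

Lemma aa_ng G (x : car G) : aa G (ng G x) ≡ ng G (aa G x).
Proof. apply ng_unique. rewrite <- aa_pl, pl_ng. apply aa_0. Qed.

Lemma swap4 G (a b c d : car G) : pl G (pl G a b) (pl G c d) ≡ pl G (pl G a c) (pl G b d).
Proof. rewrite !pl_assoc. rewrite (pl_swap G b c). reflexivity. Qed.

Fixpoint nmul G (n : nat) (x : car G) : car G :=
  match n with O => pt G | S n => pl G x (nmul G n x) end.

#[global] Instance nmul_Proper G n : Proper (eqv G ==> eqv G) (nmul G n).
Proof. induction n; intros x y H; simpl. reflexivity. apply pl_Proper; auto. Qed.

Lemma nmul_add G m n (x : car G) : nmul G (m + n) x ≡ pl G (nmul G m x) (nmul G n x).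
Proof. induction m; simpl. rewrite pl_0l; reflexivity. rewrite IHm, pl_assoc. reflexivity. Qed.

Lemma nmul_aa G n (x : car G) : nmul G n (aa G x) ≡ aa G (nmul G n x).
Proof. induction n; simpl. rewrite aa_0; reflexivity. rewrite IHn, aa_pl. reflexivity. Qed.

Definition zmul G (p : Z) (x : car G) :=
  pl G (nmul G (Z.to_nat p) x) (ng G (nmul G (Z.to_nat (- p)) x)).

#[global] Instance zmul_Proper G p : Proper (eqv G ==> eqv G) (zmul G p).
Proof. unfold zmul. intros x y H. rewrite H. reflexivity. Qed.

Lemma zmul_diff G m n (x : car G) :
  zmul G (Z.of_nat m - Z.of_nat n) x ≡ pl G (nmul G m x) (ng G (nmul G n x)).
Proof.
  unfold zmul. destruct (Nat.le_ge_cases n m) as [H|H].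
  - replace (Z.to_nat (Z.of_nat m - Z.of_nat n)) with (m - n)%nat by lia.
    replace (Z.to_nat (- (Z.of_nat m - Z.of_nat n))) with 0%nat by lia.
    replace m with ((m - n) + n)%nat at 2 by lia.
    rewrite nmul_add. simpl. rewrite ng_0, pl_0r, pl_assoc, pl_ng, pl_0r. reflexivity.
  - replace (Z.to_nat (Z.of_nat m - Z.of_nat n)) with 0%nat by lia.
    replace (Z.to_nat (- (Z.of_nat m - Z.of_nat n))) with (n - m)%nat by lia.
    replace n with ((n - m) + m)%nat at 2 by lia.
    rewrite nmul_add. simpl. rewrite pl_0l, ng_pl. rewrite pl_swap, pl_ng, pl_0r. reflexivity.
Qed.

Lemma zrepr p : p = (Z.of_nat (Z.to_nat p) - Z.of_nat (Z.to_nat (- p)))%Z.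
Proof. lia. Qed.

Lemma zmul_add G p q (x : car G) : zmul G (p + q) x ≡ pl G (zmul G p x) (zmul G q x).
Proof.
  rewrite (zrepr p) at 1. rewrite (zrepr q) at 1.
  replace (Z.of_nat (Z.to_nat p) - Z.of_nat (Z.to_nat (- p)) +
      (Z.of_nat (Z.to_nat q) - Z.of_nat (Z.to_nat (- q))))%Z
   with (Z.of_nat (Z.to_nat p + Z.to_nat q) - Z.of_nat (Z.to_nat (-p) + Z.to_nat (- q)))%Z by lia.
  rewrite zmul_diff, !nmul_add, ng_pl. unfold zmul. apply swap4.
Qed.

Lemma zmul_opp G p (x : car G) : zmul G (- p) x ≡ ng G (zmul G p x).
Proof.
  replace (- p)%Z with (Z.of_nat (Z.to_nat (- p)) - Z.of_nat (Z.to_nat p))%Z by lia.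
  rewrite zmul_diff. unfold zmul. rewrite ng_pl, ng_ng, pl_comm. reflexivity.
Qed.

Lemma zmul_0 G (x : car G) : zmul G 0 x ≡ pt G.
Proof. unfold zmul. simpl. rewrite ng_0, pl_0l. reflexivity. Qed.

Lemma zmul_1 G (x : car G) : zmul G 1 x ≡ x.
Proof. unfold zmul. simpl. rewrite ng_0, !pl_0r. reflexivity. Qed.

Lemma zmul_aa G p (x : car G) : zmul G p (aa G x) ≡ aa G (zmul G p x).
Proof. unfold zmul. rewrite !nmul_aa, aa_pl, aa_ng. reflexivity. Qed.

Definition smul G (k : Z * Z) (x : car G) := pl G (zmul G (fst k) x) (zmul G (snd k) (aa G x)).

#[global] Instance smul_Proper G k : Proper (eqv G ==> eqv G) (smul G k).
Proof. unfold smul. intros x y H. rewrite H. reflexivity. Qed.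

Lemma smul_00 G (x : car G) : smul G (0%Z, 0%Z) x ≡ pt G.
Proof. unfold smul; simpl. rewrite !zmul_0, pl_0l. reflexivity. Qed.

Lemma smul_10 G (x : car G) : smul G (1%Z, 0%Z) x ≡ x.
Proof. unfold smul; simpl. rewrite zmul_0, zmul_1, pl_0r. reflexivity. Qed.

Lemma smul_comb G p1 q1 p2 q2 (x : car G) :
  smul G (q1 - p2, p1 - q2)%Z x ≡ pl G (aa G (smul G (p1, q1) x)) (ng G (smul G (p2, q2) x)).
Proof.
  unfold smul; simpl. unfold Z.sub. rewrite !zmul_add, !zmul_opp.
  rewrite aa_pl, !zmul_aa, aa_aa, ng_pl. rewrite (pl_comm G (aa G _) (zmul G q1 x)).
  rewrite <- !zmul_aa. apply swap4.
Qed.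

Lemma smul_comb1 G p1 q1 p2 q2 (x : car G) :
  smul G (q1 - p2 + 1, p1 - q2)%Z x ≡
  pl G (aa G (smul G (p1, q1) x)) (pl G x (ng G (smul G (p2, q2) x))).
Proof.
  rewrite pl_swap, <- smul_comb. unfold smul; simpl.
  rewrite zmul_add, zmul_1. rewrite <- pl_assoc, (pl_comm G x). rewrite pl_assoc. reflexivity.
Qed.

Fixpoint sumA G (N : nat) (f : nat -> car G) : car G :=
  match N with O => pt G | S N => pl G (sumA G N f) (f N) end.

Lemma sumA_ext G N (f g : nat -> car G) : (forall n, f n ≡ g n) -> sumA G N f ≡ sumA G N g.
Proof. intro H. induction N; simpl. reflexivity. rewrite IHN, H. reflexivity. Qed.

Lemma sumA_pl G N (f g : nat -> car G) :
  sumA G N (fun n => pl G (f n) (g n)) ≡ pl G (sumA G N f) (sumA G N g).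
Proof. induction N; simpl. rewrite pl_0l; reflexivity. rewrite IHN. apply swap4. Qed.

Lemma sumA_aa G N (f : nat -> car G) : sumA G N (fun n => aa G (f n)) ≡ aa G (sumA G N f).
Proof. induction N; simpl. rewrite aa_0; reflexivity. rewrite IHN, aa_pl. reflexivity. Qed.

Lemma sumA_ng G N (f : nat -> car G) : sumA G N (fun n => ng G (f n)) ≡ ng G (sumA G N f).
Proof. induction N; simpl. rewrite ng_0; reflexivity. rewrite IHN, ng_pl. reflexivity. Qed.

Fixpoint coef (tm : term) (n : nat) : Z * Z :=
  match tm with
  | V m => if Nat.eqb m n then (1%Z, 0%Z) else (0%Z, 0%Z)
  | M u w => let (p1, q1) := coef u n in let (p2, q2) := coef w n in (q1 - p2, p1 - q2)%Z
  end.

Fixpoint Pc (tm : term) : Z * Z :=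
  match tm with
  | V _ => (0%Z, 0%Z)
  | M u w => let (p1, q1) := Pc u in let (p2, q2) := Pc w in (q1 - p2 + 1, p1 - q2)%Z
  end.

Fixpoint bnd (tm : term) : nat :=
  match tm with V m => S m | M u w => Nat.max (bnd u) (bnd w) end.

Lemma sum_delta G (v : nat -> car G) m N :
  sumA G N (fun n => smul G (if Nat.eqb m n then (1%Z, 0%Z) else (0%Z, 0%Z)) (v n))
  ≡ (if Nat.ltb m N then v m else pt G).
Proof.
  induction N; simpl. reflexivity. rewrite IHN.
  destruct (Nat.eqb_spec m N) as [->|Hne].
  - rewrite smul_10. replace (Nat.ltb N N) with false by (symmetry; apply Nat.ltb_irrefl).
    replace (Nat.ltb N (S N)) with true by (symmetry; apply Nat.ltb_lt; lia).
    apply pl_0l.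
  - rewrite smul_00, pl_0r.
    destruct (Nat.ltb_spec m N), (Nat.ltb_spec m (S N)); try reflexivity; lia.
Qed.

Lemma main_repr G (v : nat -> car G) (tm : term) N : (bnd tm <= N)%nat ->
  eval (op G) v tm ≡ pl G (sumA G N (fun n => smul G (coef tm n) (v n))) (smul G (Pc tm) (cc G)).
Proof.
  revert N; induction tm as [m|u IHu w IHw]; intros N HN; cbn [eval bnd] in *.
  - simpl coef. rewrite sum_delta. replace (Nat.ltb m N) with true by (symmetry; apply Nat.ltb_lt; lia).
    rewrite smul_00, pl_0r. reflexivity.
  - rewrite (IHu N) by lia. rewrite (IHw N) by lia.
    rewrite affine.
    rewrite (sumA_ext G N (fun n => smul G (coef (M u w) n) (v n)) (fun n => pl G (aa G (smul G (coef u n) (v n))) (ng G (smul G (coef w n) (v n))))).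
    2:{ intro n. simpl. destruct (coef u n) as [p1 q1], (coef w n) as [p2 q2]. apply smul_comb. }
    rewrite sumA_pl, sumA_aa, sumA_ng.
    simpl Pc. destruct (Pc u) as [p1 q1], (Pc w) as [p2 q2]. rewrite smul_comb1.
    rewrite aa_pl, ng_pl.
    set (a1 := aa G (sumA G N _)). set (a2 := aa G (smul G _ _)).
    set (b1 := ng G (sumA G N _)). set (b2 := ng G (smul G _ _)).
    rewrite !pl_assoc. apply pl_Proper; [reflexivity|].
    rewrite (pl_swap G b1 a2). apply pl_Proper; [reflexivity|].
    apply pl_swap.
Qed.

Definition op1 (a b : Z) : Z := (a - b)%Z.
Definition op2 (a b : Z) : Z := (- a - b)%Z.

Lemma coef_op1 tm n : eval (fun a b : Z => (a - b)%Z) (fun m => if Nat.eqb m n then 1%Z else 0%Z) tm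
  = (fst (coef tm n) + snd (coef tm n))%Z.
Proof.
  induction tm as [m|u IHu w IHw]; simpl. destruct (Nat.eqb m n); reflexivity.
  rewrite IHu, IHw. destruct (coef u n), (coef w n); simpl; lia.
Qed.

Lemma coef_op2 tm n : eval (fun a b : Z => (- a - b)%Z) (fun m => if Nat.eqb m n then 1%Z else 0%Z) tm
  = (fst (coef tm n) - snd (coef tm n))%Z.
Proof.
  induction tm as [m|u IHu w IHw]; simpl. destruct (Nat.eqb m n); reflexivity.
  rewrite IHu, IHw. destruct (coef u n), (coef w n); simpl; lia.
Qed.

Lemma Pc_op1 tm : eval (fun a b : Z => (a - b)%Z) (fun _ => 1%Z) tm = (1 - (fst (Pc tm) + snd (Pc tm)))%Z.
Proof.
  induction tm as [m|u IHu w IHw]; cbn [eval Pc]. reflexivity.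
  rewrite IHu, IHw. destruct (Pc u), (Pc w); cbn [fst snd]; lia.
Qed.

Lemma Pc_op2 tm : eval (fun a b : Z => (- a - b)%Z) (fun _ => 1%Z) tm = (1 - 3 * (fst (Pc tm) - snd (Pc tm)))%Z.
Proof.
  induction tm as [m|u IHu w IHw]; cbn [eval Pc]. reflexivity.
  rewrite IHu, IHw. destruct (Pc u), (Pc w); cbn [fst snd]; lia.
Qed.

Lemma sigma_coef s tm n : Sigma24 (s, tm) -> coef s n = coef tm n.
Proof.
  intros [H1 H2]. specialize (H1 (fun m => if Nat.eqb m n then 1%Z else 0%Z)).
  specialize (H2 (fun m => if Nat.eqb m n then 1%Z else 0%Z)). simpl in H1, H2.
  rewrite coef_op1, coef_op1 in H1. rewrite coef_op2, coef_op2 in H2.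
  destruct (coef s n), (coef tm n); cbn [fst snd] in *. f_equal; lia.
Qed.

Lemma sigma_Pc s tm : Sigma24 (s, tm) -> Pc s = Pc tm.
Proof.
  intros [H1 H2]. specialize (H1 (fun _ => 1%Z)). specialize (H2 (fun _ => 1%Z)). simpl in H1, H2.
  rewrite Pc_op1, Pc_op1 in H1. rewrite Pc_op2, Pc_op2 in H2.
  destruct (Pc s), (Pc tm); cbn [fst snd] in *. f_equal; lia.
Qed.

Lemma abstract_complete G (v : nat -> car G) s tm : Sigma24 (s, tm) -> eval (op G) v s ≡ eval (op G) v tm.
Proof.
  intro H. rewrite (main_repr G v s (Nat.max (bnd s) (bnd tm))) by lia.
  rewrite (main_repr G v tm (Nat.max (bnd s) (bnd tm))) by lia.
  rewrite (sigma_Pc _ _ H). apply pl_Proper; [|reflexivity].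
  apply sumA_ext. intro n. rewrite (sigma_coef _ _ n H). reflexivity.
Qed.

#[global] Instance der_Equiv : Equivalence (derivable B24).
Proof. split. intro; apply der_refl. intros a b; apply der_sym. intros a b c; apply der_trans. Qed.

#[global] Instance der_Proper : Proper (derivable B24 ==> derivable B24 ==> derivable B24) M.
Proof. intros a b H c d H'. apply der_cong; auto. Qed.

Definition sg4 (a b c d : term) (n : nat) : term :=
  match n with O => a | S O => b | S (S O) => c | S (S (S O)) => d | _ => V n end.

Lemma use_ax (p : identity) a b c d : B24 p ->
  derivable B24 (subst (sg4 a b c d) (fst p)) (subst (sg4 a b c d) (snd p)).
Proof. intro H. apply der_ax. exact H. Qed.

Definition TALG : ALG.
Proof.
  refine (mkALG term (derivable B24) M (V 0) der_Equiv der_Proper _ _ _ _).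
  - intros a b. exact (use_ax (M x (M x y), y) a b a a ltac:(unfold B24; simpl; tauto)).
  - intros a b c d. exact (use_ax (M (M x y) (M z t), M (M x z) (M y t)) a b c d ltac:(unfold B24; simpl; tauto)).
  - intros a b c d. exact (use_ax (M (M x y) (M z t), M (M t y) (M z x)) a b c d ltac:(unfold B24; simpl; tauto)).
  - intros a b c d. exact (use_ax (M x (M y (M z t)), M z (M y (M x t))) a b c d ltac:(unfold B24; simpl; tauto)).
Defined.

Lemma eval_V tm : eval M V tm = tm.
Proof. induction tm; simpl; congruence. Qed.

Lemma eval_subst {T} (o : T -> T -> T) v sg tm :
  eval o v (subst sg tm) = eval o (fun n => eval o v (sg n)) tm.
Proof. induction tm; simpl; congruence. Qed.

Lemma soundness s tm : derivable B24 s tm -> Sigma24 (s, tm).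
Proof.
  induction 1 as [p sg Hp| u | u w _ [IH1 IH2] | u w r _ [A1 A2] _ [B1 B2] | s1 t1 s2 t2 _ [A1 A2] _ [B1 B2]].
  - unfold B24, B24_list in Hp. simpl in Hp.
    split; intro v; cbn [fst snd]; rewrite !eval_subst;
    repeat destruct Hp as [Hp|Hp]; try contradiction; subst p; cbn [fst snd eval x y z t]; lia.
  - split; intro; reflexivity.
  - unfold satisfies in *; cbn [fst snd] in *. split; intro v; symmetry; auto.
  - unfold satisfies in *; cbn [fst snd] in *. split; intro v; [rewrite A1; apply B1 | rewrite A2; apply B2].
  - unfold satisfies in *; cbn [fst snd eval] in *. split; intro v; cbn [fst snd eval]; [rewrite A1, B1 | rewrite A2, B2]; reflexivity.
Qed.

Theorem theorem3p1 : is_basis B24 Sigma24.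
Proof.
  intros s tm. split.
  - apply soundness.
  - intro H. pose proof (abstract_complete TALG V s tm H) as K. simpl in K.
    rewrite !eval_V in K. exact K.
Qed.
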